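(* In the setting below, fix $k,d\in\mathbb N$, let $\omega$ be the smallest integer with $2\omega\ge\max\{\deg f,\deg g_1,\ldots,\deg g_m\}$, and assume $2\omega\le d_{\max}$. Let $((\boldsymbol\theta^{*\ell})_{\ell=1}^p,\mathbf y^* )$ be an optimal solution of the dual program defining $\tilde q^k_d$. If $\operatorname{rank}\mathbf M_\omega(\boldsymbol\theta^{*\ell})=1$ for every $\ell=1,\ldots,p$, then $\tilde q^k_d=f^*$ and $\mathbf x^*:=(y^*_{e_1},\ldots,y^*_{e_n})$ (where $e_i$ is the $i$-th unit multi-index) is an optimal solution of (P).
   Context: Problem (P): $f^*=\min\{f(\mathbf x):\mathbf x\in\mathbf K\}$ with $\mathbf K=\{\mathbf x\in\mathbb R^n:0\le g_j(\mathbf x)\le 1,\ j=1,\ldots,m\}$, $f,g_j\in\mathbb R[\mathbf x]$ ($f^*=+\infty$ if $\mathbf K=\emptyset$). $\mathbb R[\mathbf x;I]$ is the ring of polynomials in $\{x_i:i\in I\}$. Sparsity Assumption: there are $p\in\mathbb N$ and sets $I_\ell\subseteq\{1,\ldots,n\}$, $J_\ell\subseteq\{1,\ldots,m\}$ with $f=\sum_\ell f^\ell$ for some $f^\ell\in\mathbb R[\mathbf x;I_\ell]$, $g_j\in\mathbb R[\mathbf x;I_\ell]$ for $j\in J_\ell$, $\bigcup_\ell I_\ell=\{1,\ldots,n\}$, $\bigcup_\ell J_\ell=\{1,\ldots,m\}$, and for every $\ell\le p-1$ some $s\le\ell$ with $I_{\ell+1}\cap\bigcup_{r\le\ell}I_r\subseteq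 I_s$. $h_{\alpha\beta}=\prod_j g_j^{\alpha_j}(1-g_j)^{\beta_j}$; $N^\ell_d=\{(\alpha,\beta)\in\mathbb N_0^m\times\mathbb N_0^m:\mathrm{supp}(\alpha)\cup\mathrm{supp}(\beta)\subseteq J_\ell,\ \sum_j(\alpha_j+\beta_j)\le d\}$; $d_{\max}=\max\{\deg f,2k,d\max_j\deg g_j\}$. Let $\mathcal I_\ell=\{\gamma\in\mathbb N_0^n:|\gamma|\le d_{\max},\ \mathrm{supp}(\gamma)\subseteq I_\ell\}$, $\Gamma=\bigcup_\ell\mathcal I_\ell$. For a sequence $\boldsymbol\theta=(\theta_\gamma)$, $L_{\boldsymbol\theta}(\sum_\gamma q_\gamma\mathbf x^\gamma)=\sum_\gamma q_\gamma\theta_\gamma$, and for $t$ with $2t\le d_{\max}$, $\mathbf M_t(\boldsymbol\theta^\ell)$ is the matrix indexed by $\alpha,\beta\in\mathcal I_\ell$ with $|\alpha|,|\beta|\le t$, with entries $\theta^\ell_{\alpha+\beta}$. Dual program: $\tilde q^k_d=\inf\{L_{\mathbf y}(f):\mathbf y=(y_\gamma)_{\gamma\in\Gamma},\ \boldsymbol\theta^\ell=(\theta^\ell_\gamma)_{\gamma\in\mathcal I_\ell},\ y_\gamma=\theta^\ell_\gamma\ \forall\ell,\ \gamma\in\mathcal I_\ell,\ y_0=1,\ \mathbf M_k(\boldsymbol\theta^\ell)\succeq0,\ L_{\boldsymbol\theta^\ell}(h_{\alpha\beta})\ge0\ \forall(\alpha,\beta)\in N^\ell_d,\ \ell=1,\ldots,p\}$.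 *)

(* Defs.v *)
From HB Require Import structures.
From mathcomp Require Import all_boot all_order all_algebra.
Set Implicit Arguments. Unset Strict Implicit. Unset Printing Implicit Defensive.
Import Order.TTheory GRing.Theory Num.Theory.
Local Open Scope ring_scope.

Section Poly.
Variable (R : realFieldType) (n : nat).

Definition mono := {ffun 'I_n -> nat}.
Definition mzero : mono := [ffun => 0%N].
Definition madd (a b : mono) : mono := [ffun i => (a i + b i)%N].
Definition munit (i : 'I_n) : mono := [ffun j => nat_of_bool (j == i)].
Definition mdeg (a : mono) : nat := (\sum_(i < n) a i)%N.
Definition msupp_in (a : mono) (I : {set 'I_n}) : bool :=
  [forall i, (a i != 0%N) ==> (i \in I)].

(* a polynomial is a finite formal sum of terms  c * x^gamma  *)
Definition mpoly := seq (mono * R).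

Definition pcoef (p : mpoly) (a : mono) : R :=
  \sum_(t <- p | t.1 == a) t.2.
Definition pdeg (p : mpoly) : nat :=
  (\max_(t <- p | pcoef p t.1 != 0%R) mdeg t.1)%N.
Definition pvars_in (p : mpoly) (I : {set 'I_n}) : Prop :=
  forall a, pcoef p a != 0 -> msupp_in a I.

Definition pconst (c : R) : mpoly := [:: (mzero, c)].
Definition pmul (p q : mpoly) : mpoly :=
  [seq (madd t.1 s.1, t.2 * s.2) | t <- p, s <- q].
Definition pexp (p : mpoly) (k : nat) : mpoly := iter k (pmul p) (pconst 1).
Definition pone_sub (g : mpoly) : mpoly :=
  (mzero, 1) :: [seq (t.1, - t.2) | t <- g].

Definition meval (a : mono) (x : 'I_n -> R) : R := \prod_(i < n) x i ^+ a i.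
Definition peval (p : mpoly) (x : 'I_n -> R) : R :=
  \sum_(t <- p) t.2 * meval t.1 x.

Definition Lfun (th : mono -> R) (p : mpoly) : R := \sum_(t <- p) t.2 * th t.1.

(* moment matrix M_t(theta) indexed by gamma with supp(gamma) in I, |gamma| <= t *)
Definition mono_b (t : nat) := {ffun 'I_n -> 'I_t.+1}.
Definition to_mono t (a : mono_b t) : mono := [ffun i => nat_of_ord (a i)].
Definition adm (I : {set 'I_n}) (t : nat) : {set mono_b t} :=
  [set a | msupp_in (to_mono a) I && (mdeg (to_mono a) <= t)%N].
Definition momat (I : {set 'I_n}) (t : nat) (th : mono -> R)
  : 'M[R]_(#|adm I t|) :=
  \matrix_(i, j) th (madd (to_mono (enum_val i)) (to_mono (enum_val j))).

End Poly.

Definition psd (R : realFieldType) (N : nat) (M : 'M[R]_N) : Prop :=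
  forall v : 'rV[R]_N, 0 <= (v *m M *m v^T) 0 0.

Section Problem.
Variables (R : realFieldType) (n m p : nat).
Variables (f : mpoly R n) (g : 'I_m -> mpoly R n).
Variables (I : 'I_p -> {set 'I_n}) (J : 'I_p -> {set 'I_m}).

Definition inK (x : 'I_n -> R) : Prop :=
  forall j, 0 <= peval (g j) x <= 1.

Definition hab (a b : 'I_m -> nat) : mpoly R n :=
  foldr (fun j acc => pmul (pmul (pexp (g j) (a j)) (pexp (pone_sub (g j)) (b j))) acc)
        (pconst n 1) (enum 'I_m).

Definition inN (l : 'I_p) (d : nat) (a b : 'I_m -> nat) : Prop :=
  (forall j, (a j != 0%N) || (b j != 0%N) -> j \in J l) /\
  (\sum_(j < m) (a j + b j) <= d)%N.

Definition maxdeg_g : nat := (\max_(j < m) pdeg (g j))%N.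
Definition dmax (k d : nat) : nat := maxn (pdeg f) (maxn (2 * k) (d * maxdeg_g)).
Definition omega : nat := uphalf (maxn (pdeg f) maxdeg_g).

Definition sparsity (fl : 'I_p -> mpoly R n) : Prop :=
  (forall a, pcoef f a = \sum_(l < p) pcoef (fl l) a) /\
  (forall l, pvars_in (fl l) (I l)) /\
  (forall l j, j \in J l -> pvars_in (g j) (I l)) /\
  (\bigcup_(l < p) I l = setT) /\
  (\bigcup_(l < p) J l = setT) /\
  (forall l l1 : 'I_p, l1 = l.+1 :> nat ->
     exists s : 'I_p, (s <= l)%N /\
       (I l1 :&: \bigcup_(r < p | (r <= l)%N) I r) \subset I s).

(* feasibility for the dual program defining  q~^k_d ;
   y is indexed by Gamma, theta^l by I_l (values outside are irrelevant) *)
Definition dual_feasible (k d : nat) (th : 'I_p -> mono n -> R) (y : mono n -> R)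
  : Prop :=
  (forall l a, msupp_in a (I l) -> (mdeg a <= dmax k d)%N -> y a = th l a) /\
  y (mzero n) = 1 /\
  (forall l, psd (momat (I l) k (th l))) /\
  (forall l a b, inN l d a b -> 0 <= Lfun (th l) (hab a b)).

Definition dual_optimal (k d : nat) (th : 'I_p -> mono n -> R) (y : mono n -> R)
  : Prop :=
  dual_feasible k d th y /\
  (forall th' y', dual_feasible k d th' y' -> Lfun y f <= Lfun y' f).

End Problem.

(* Main.v *)
Require Import Defs.
From HB Require Import structures.
From mathcomp Require Import all_boot all_order all_algebra.
From mathcomp Require Import ring zify.
Import Order.TTheory GRing.Theory Num.Theory.
Local Open Scope ring_scope.
Set Implicit Arguments. Unset Strict Implicit. Unset Printing Implicit Defensive.

Section Aux.
Variables (R : realFieldType) (n : nat).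
Implicit Types (a b : mono n) (x : 'I_n -> R) (i : 'I_n) (I : {set 'I_n}).

Lemma madd0m a : madd (mzero n) a = a.
Proof. by apply/ffunP=> i; rewrite !ffunE. Qed.
Lemma maddm0 a : madd a (mzero n) = a.
Proof. by apply/ffunP=> i; rewrite !ffunE addn0. Qed.
Lemma mevalD a b x : meval (madd a b) x = meval a x * meval b x.
Proof. by rewrite /meval -big_split; apply: eq_bigr=> i _; rewrite ffunE exprD. Qed.
Lemma meval0 x : meval (mzero n) x = 1 :> R.
Proof. by rewrite /meval big1 // => i _; rewrite ffunE expr0. Qed.
Lemma meval_unit i x : meval (munit i) x = x i.
Proof.
rewrite /meval (bigD1 i) //= big1 ?mulr1; first by rewrite ffunE eqxx expr1.
by move=> j /negbTE ji; rewrite ffunE ji expr0.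
Qed.
Lemma mdegD a b : mdeg (madd a b) = (mdeg a + mdeg b)%N.
Proof. by rewrite /mdeg -big_split; apply: eq_bigr=> i _; rewrite ffunE. Qed.
Lemma mdeg0 : mdeg (mzero n) = 0%N.
Proof. by rewrite /mdeg big1 // => i _; rewrite ffunE. Qed.
Lemma mdeg_unit i : mdeg (munit i) = 1%N.
Proof.
rewrite /mdeg (bigD1 i) //= big1 ?ffunE ?eqxx //.
by move=> j /negbTE ji; rewrite ffunE ji.
Qed.
Lemma mdeg_ge a i : (a i <= mdeg a)%N.
Proof. by rewrite /mdeg (bigD1 i) //= leq_addr. Qed.
Lemma mdeg_eq0 a : mdeg a = 0%N -> a = mzero n.
Proof.
move=> h; apply/ffunP=> i; rewrite ffunE; have := mdeg_ge a i; rewrite h.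
by case: (a i).
Qed.
Lemma msupp0 I : msupp_in (mzero n) I.
Proof. by apply/forallP=> i; rewrite ffunE. Qed.
Lemma msupp_unit I i : i \in I -> msupp_in (munit i) I.
Proof. by move=> hi; apply/forallP=> j; rewrite ffunE; case: (j =P i)=> [->|] //=; rewrite hi implybT. Qed.
Lemma msupp_le I a b : (forall i, a i <= b i)%N -> msupp_in b I -> msupp_in a I.
Proof.
move=> hle /forallP hb; apply/forallP=> i; apply/implyP=> hai.
apply: (implyP (hb i)); move: hai (hle i); case: (b i)=> //; by case: (a i).
Qed.

Lemma msplit a s : (s <= mdeg a)%N ->
  exists c : mono n, (forall i, c i <= a i)%N /\ mdeg c = s.
Proof.
elim: s=> [|s IH] hs.
  by exists (mzero n); split; [move=> i; rewrite ffunE|exact: mdeg0].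
have [c [hc dc]] := IH (ltnW hs).
case: (boolP [exists i, c i < a i]%N).
  case/existsP=> i hi; exists (madd c (munit i)); split.
    move=> j; rewrite !ffunE; case: eqP=> [->|_]; first by rewrite addn1.
    by rewrite addn0.
  by rewrite mdegD mdeg_unit dc addn1.
rewrite negb_exists=> /forallP hn; exfalso.
have : (mdeg a <= mdeg c)%N.
  by apply: leq_sum=> i _; have := hn i; rewrite -leqNgt.
by rewrite dc leqNgt hs.
Qed.

Lemma mdiff a (c : mono n) : (forall i, c i <= a i)%N ->
  exists b : mono n, a = madd c b /\ (forall i, b i <= a i)%N.
Proof.
move=> hc; exists [ffun i => a i - c i]%N; split.
  by apply/ffunP=> i; rewrite !ffunE subnKC.
by move=> i; rewrite ffunE leq_subr.
Qed.

End Aux.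
Section Aux2.
Variables (R : realFieldType) (n : nat).
Implicit Types (a b : mono n) (x : 'I_n -> R) (i : 'I_n) (I : {set 'I_n})
  (p q : mpoly R n) (th : mono n -> R).

Lemma sum_pred1_seq (T : eqType) (r : seq T) (i : T) (F : T -> R) :
  uniq r -> i \in r -> \sum_(j <- r | j == i) F j = F i.
Proof.
move=> u ir; rewrite (big_rem i) //= eqxx big1_seq ?addr0 //.
by move=> j /andP [/eqP -> ]; rewrite mem_rem_uniqF.
Qed.

Lemma Lfun_coef th p :
  Lfun th p = \sum_(a <- undup (map fst p)) pcoef p a * th a.
Proof.
rewrite /pcoef.
transitivity (\sum_(a <- undup (map fst p)) \sum_(t <- p)
   (if t.1 == a then t.2 * th t.1 else 0)); last first.
  apply: eq_bigr=> a _; rewrite mulr_suml [RHS]big_mkcond /=; apply: eq_bigr=> t _.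
  by case: eqP=> // ->.
rewrite exchange_big /Lfun; apply: eq_big_seq=> t tp.
rewrite -big_mkcond /=.
under eq_bigl do rewrite eq_sym.
by rewrite sum_pred1_seq ?undup_uniq // mem_undup map_f.
Qed.

Lemma Lfun_eq th th' p : (forall a, pcoef p a != 0 -> th a = th' a) ->
  Lfun th p = Lfun th' p.
Proof.
move=> h; rewrite !Lfun_coef; apply: eq_bigr=> a _.
by case: (eqVneq (pcoef p a) 0)=> [->|/h ->]; rewrite ?mul0r.
Qed.

Lemma pcoef_mem p a : pcoef p a != 0 -> exists2 t, t \in p & t.1 = a.
Proof.
move=> h; case: (boolP (has (fun t => t.1 == a) p)).
  by case/hasP=> t tp /eqP ta; exists t.
by move=> hn; move: h; rewrite /pcoef big_hasC ?eqxx.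
Qed.

Lemma pdeg_ge p a : pcoef p a != 0 -> (mdeg a <= pdeg p)%N.
Proof.
move=> h; have [t tp ta] := pcoef_mem h; rewrite /pdeg -ta.
by rewrite (leq_bigmax_seq (F := fun t : mono n * R => mdeg t.1) t tp) //= ta.
Qed.

Lemma peval_Lfun p x : peval p x = Lfun (fun a => meval a x) p.
Proof. by []. Qed.

Lemma Lfun_one_sub th q : Lfun th (pone_sub q) = th (mzero n) - Lfun th q.
Proof.
rewrite /Lfun /pone_sub big_cons big_map /= mul1r -sumrN; congr (_ + _).
by apply: eq_bigr=> t _; rewrite mulNr.
Qed.

Lemma Lfun_pmul1 th q : Lfun th (pmul (pconst n 1) q) = Lfun th q.
Proof.
rewrite /pmul /pconst /= cats0 /Lfun big_map; apply: eq_bigr=> t _.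
by rewrite /= madd0m mul1r.
Qed.

Lemma pmul1 q : pmul (pconst n 1) q = q.
Proof.
rewrite /pmul /pconst /= cats0 -[RHS]map_id; apply: eq_map=> t.
by rewrite madd0m mul1r; case: t.
Qed.

Lemma pmulr1 q : pmul q (pconst n 1) = q.
Proof.
rewrite /pmul /pconst /=; elim: q=> //= t q ->.
by rewrite maddm0 mulr1; case: t.
Qed.

Lemma peval_mul p q x : peval (pmul p q) x = peval p x * peval q x.
Proof.
rewrite /peval /pmul big_allpairs_dep /= mulr_suml; apply: eq_bigr=> t _.
by rewrite mulr_sumr; apply: eq_bigr=> s _; rewrite /= mevalD mulrACA.
Qed.

Lemma peval_const c x : peval (pconst n c) x = c.
Proof. by rewrite /peval /pconst big_seq1 meval0 mulr1. Qed.

Lemma peval_exp q k x : peval (pexp q k) x = peval q x ^+ k.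
Proof.
elim: k=> [|k IH]; first by rewrite /pexp /= peval_const.
by rewrite /pexp iterS -/(pexp q k) peval_mul IH exprS.
Qed.

Lemma peval_one_sub q x : peval (pone_sub q) x = 1 - peval q x.
Proof. by rewrite !peval_Lfun Lfun_one_sub meval0. Qed.

End Aux2.
Section Aux3.
Variables (R : realFieldType) (n : nat).
Implicit Types (a b : mono n) (x : 'I_n -> R) (I : {set 'I_n})
  (p q : mpoly R n) (th : mono n -> R).

Lemma mdeg1 a : mdeg a = 1%N -> exists i, a = munit i.
Proof.
move=> h; case: (boolP [exists i, a i != 0%N]); last first.
  rewrite negb_exists=> /forallP hn; exfalso.
  have : a = mzero n by apply/ffunP=> i; rewrite ffunE; apply/eqP; have := hn i; case: eqP.
  by move=> e; move: h; rewrite e mdeg0.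
case/existsP=> i hi; exists i.
have hs : mdeg a = (a i + \sum_(j | j != i) a j)%N by rewrite /mdeg (bigD1 i).
have hai : a i = 1%N.
  have := mdeg_ge a i. rewrite h. move: hi. case: (a i) => [|[|]] //.
have h0 : (\sum_(j | j != i) a j == 0)%N by rewrite h hai in hs; apply/eqP; lia.
move: h0; rewrite sum_nat_eq0=> /forallP h0.
apply/ffunP=> j; rewrite ffunE; case: (j =P i)=> [->|/eqP ji] //=.
by have := h0 j; rewrite ji => /eqP.
Qed.

Lemma rank1_minor N (A : 'M[R]_N) : \rank A = 1%N ->
  forall i1 i2 j1 j2 : 'I_N, A i1 j1 * A i2 j2 = A i1 j2 * A i2 j1.
Proof.
move=> hr i1 i2 j1 j2.
have N0 : (0 < N)%N by apply: leq_ltn_trans (ltn_ord i1).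
pose k0 : 'I_N := Ordinal N0.
set L := col_ebase A; set U := row_ebase A.
have hA : forall i j, A i j = L i k0 * U k0 j.
  move=> i j; rewrite -{1}(mulmx_ebase A) hr -/L -/U mxE (bigD1 k0) //= big1 ?addr0.
    congr (_ * _); rewrite mxE (bigD1 k0) //= big1 ?addr0 ?mxE /= ?mulr1 //.
    move=> k /negbTE kk; rewrite mxE /=.
    have -> : (nat_of_ord k == 0%N) = false by apply/negbTE; move: kk; apply: contraFN => /eqP e; apply/eqP/val_inj.
    by rewrite mulr0.
  move=> k kk; rewrite mxE big1 ?mul0r // => k' _; rewrite mxE.
  case: (k' =P k :> nat)=> [e|]; last by rewrite mulr0.
  have -> : (k' < 1)%N = false.
    by apply/negbTE; rewrite e; move: kk; apply: contra=> hk; apply/eqP/val_inj=> /=; lia.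
  by rewrite andbF mulr0.
rewrite !hA; ring.
Qed.

Lemma peval_hab m (g : 'I_m -> mpoly R n) (a b : 'I_m -> nat) x : inK g x -> 0 <= peval (hab g a b) x.
Proof.
move=> hK; rewrite /hab; elim: (enum 'I_m)=> /= [|j s IH]; first by rewrite peval_const.
have /andP [h0 h1] := hK j.
rewrite !peval_mul !peval_exp peval_one_sub; apply: mulr_ge0=> //.
by apply: mulr_ge0; apply: exprn_ge0; rewrite ?subr_ge0.
Qed.

Lemma hab1 m (g : 'I_m -> mpoly R n) j (a b : 'I_m -> nat) :
  (forall j', j' != j -> a j' = 0%N /\ b j' = 0%N) ->
  hab g a b = pmul (pmul (pexp (g j) (a j)) (pexp (pone_sub (g j)) (b j))) (pconst n 1).
Proof.
move=> h; rewrite /hab.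
have : forall s : seq 'I_m, uniq s -> foldr (fun j0 acc => pmul (pmul (pexp (g j0) (a j0))
     (pexp (pone_sub (g j0)) (b j0))) acc) (pconst n 1) s =
   if j \in s then pmul (pmul (pexp (g j) (a j)) (pexp (pone_sub (g j)) (b j))) (pconst n 1)
   else pconst n 1.
  elim=> //= x s IH /andP [xs us]; rewrite IH // inE.
  case: (x =P j)=> [e|/eqP nx] /=.
    by rewrite -e (negbTE xs) eqxx.
  have [-> ->] := h x nx; rewrite /pexp /= pmul1 pmul1 [j == x]eq_sym (negbTE nx).
  by case: (j \in s).
by move=> H; rewrite H ?enum_uniq ?mem_enum.
Qed.

Lemma momat_idx I t a : msupp_in a I -> (mdeg a <= t)%N ->
  exists k : 'I_#|adm I t|, to_mono (enum_val k) = a.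
Proof.
move=> hs hd.
pose ab : mono_b n t := [ffun i => inord (a i)].
have hab : to_mono ab = a.
  apply/ffunP=> i; rewrite !ffunE inordK // ltnS; exact: leq_trans (mdeg_ge a i) hd.
have hin : ab \in adm I t by rewrite inE hab hs hd.
by exists (enum_rank_in hin ab); rewrite enum_rankK_in.
Qed.

Lemma psd_dirac I t x : psd (momat I t (fun a => meval a x)).
Proof.
move=> v; set w := \row_k meval (to_mono (enum_val k)) x : 'rV[R]_#|adm I t|.
have -> : momat I t (fun a => meval a x) = w^T *m w.
  by apply/matrixP=> i j; rewrite !mxE big_ord1 !mxE mevalD.
rewrite mulmxA -(mulmxA (v *m w^T)) -[w *m v^T]trmxK trmx_mul trmxK.
set s := v *m w^T.
rewrite mxE big_ord1 [s^T _ _]mxE -expr2; exact: sqr_ge0.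
Qed.

Lemma moment_claim I w th x :
  \rank (momat I w th) = 1%N -> th (mzero n) = 1 ->
  (forall i, i \in I -> (1 <= 2 * w)%N -> th (munit i) = x i) ->
  forall c, msupp_in c I -> (mdeg c <= 2 * w)%N -> th c = meval c x.
Proof.
move=> hr h0 hu.
have hmul : forall a b, msupp_in a I -> (mdeg a <= w)%N -> msupp_in b I -> (mdeg b <= w)%N ->
    th (madd a b) = th a * th b.
  move=> a b sa da sb db.
  have [ia ea] := momat_idx sa da; have [ib eb] := momat_idx sb db.
  have [i0 e0] := momat_idx (t := w) (msupp0 I) (ltac:(by rewrite mdeg0) : (mdeg (mzero n) <= w)%N).
  have := rank1_minor hr ia i0 ib i0; rewrite !mxE ea eb e0 madd0m h0 mulr1 maddm0.
  by move=> ->; rewrite madd0m.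
suff: forall s c, (mdeg c <= s)%N -> msupp_in c I -> (mdeg c <= 2 * w)%N -> th c = meval c x.
  by move=> H c; apply: H (leqnn _).
elim=> [|s IH] c hc sc dc.
  have -> : c = mzero n by apply: mdeg_eq0; lia.
  by rewrite h0 meval0.
case: (leqP (mdeg c) s)=> hcs; first exact: IH.
have hD : mdeg c = s.+1 by lia.
case: (s =P 0%N)=> [s0|/eqP s0].
  have [i ci] := mdeg1 (etrans hD (congr1 S s0)).
  have iI : i \in I.
    by move/forallP: sc => /(_ i) /implyP; apply; rewrite ci ffunE eqxx.
  by rewrite ci hu ?meval_unit //; rewrite ci mdeg_unit in dc.
have [a [ha da]] := msplit (leq_div (mdeg c) 2).
have [b [eb hb]] := mdiff ha.
have hcab : mdeg c = (mdeg a + mdeg b)%N by rewrite {1}eb mdegD.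
have db : mdeg b = (mdeg c - mdeg c %/ 2)%N by lia.
have sa := msupp_le ha sc; have sb := msupp_le hb sc.
rewrite eb hmul ?mevalD; [|done|lia|done|lia].
congr (_ * _); apply: IH; rewrite ?da ?db //; lia.
Qed.

End Aux3.
Unset Implicit Arguments.
Set Strict Implicit.

Theorem mainTheorem5 (R : realFieldType) (n m p : nat)
  (f : mpoly R n) (g : 'I_m -> mpoly R n)
  (I : 'I_p -> {set 'I_n}) (J : 'I_p -> {set 'I_m})
  (fl : 'I_p -> mpoly R n)
  (Hsp : sparsity f g I J fl)
  (k d : nat) (Hk : (1 <= k)%N) (Hd : (1 <= d)%N)
  (Hom : (2 * omega f g <= dmax f g k d)%N)
  (th : 'I_p -> mono n -> R) (y : mono n -> R)
  (Hopt : dual_optimal f g I J k d th y)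
  (Hrank : forall l : 'I_p, \rank (momat (I l) (omega f g) (th l)) = 1%N) :
  let xs : 'I_n -> R := fun i => y (munit i) in
  [/\ inK g xs,
      (forall x, inK g x -> peval f xs <= peval f x)
    & Lfun y f = peval f xs].
Proof.
move=> xs.
case: Hopt=> [[Hy [Hy0 [Hpsd Hh]]] Hmin].
case: Hsp=> [Hf [Hfl [Hg [HI [HJ _]]]]].
set w := omega f g in Hom Hrank.
have h2w : forall c, (c <= maxn (pdeg f) (maxdeg_g g))%N -> (c <= 2 * w)%N.
  move=> c hc; apply: leq_trans hc _; rewrite /w /omega mul2n uphalfK; exact: leq_addl.
have Hth : forall l c, msupp_in c (I l) -> (mdeg c <= 2 * w)%N -> th l c = meval c xs.
  move=> l; apply: moment_claim (Hrank l) _ _.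
    by rewrite -(Hy l) ?msupp0 ?mdeg0.
  move=> i iI h1; rewrite -(Hy l) ?msupp_unit ?mdeg_unit //; lia.
have Hgj : forall l j, j \in J l -> Lfun (th l) (g j) = peval (g j) xs.
  move=> l j jJ; rewrite peval_Lfun; apply: Lfun_eq=> c hc.
  apply: Hth; first exact: Hg jJ c hc.
  apply: h2w; apply: leq_trans (pdeg_ge hc) _.
  apply: leq_trans (leq_maxr _ _); rewrite /maxdeg_g; exact: (leq_bigmax (F := fun j => pdeg (g j)) j).
have HK : inK g xs.
  move=> j.
  have : j \in \bigcup_(l < p) J l by rewrite HJ inE.
  case/bigcupP=> l _ jJ.
  have e : forall j', j' != j ->
      nat_of_bool (j' == j) = 0%N /\ (fun _ : 'I_m => 0%N) j' = 0%N.
    by move=> j' /negbTE ->.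
  have e' : forall j', j' != j ->
      (fun _ : 'I_m => 0%N) j' = 0%N /\ nat_of_bool (j' == j) = 0%N.
    by move=> j' /negbTE ->.
  have inN1 : inN J l d (fun j' => nat_of_bool (j' == j)) (fun _ => 0%N).
    split; last by rewrite (bigD1 j) //= eqxx big1 // => j' /negbTE ->.
    by move=> j'; rewrite orbF; case: (j' =P j)=> // ->.
  have inN2 : inN J l d (fun _ => 0%N) (fun j' => nat_of_bool (j' == j)).
    split; last by rewrite (bigD1 j) //= eqxx big1 // => j' /negbTE ->.
    by move=> j'; case: (j' =P j)=> // ->.
  have h1 := Hh l _ _ inN1; have h2 := Hh l _ _ inN2.
  rewrite (hab1 g e) eqxx /pexp /= !pmulr1 in h1.
  rewrite (hab1 g e') eqxx /pexp /= pmul1 !pmulr1 Lfun_one_sub in h2.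
  rewrite -(Hgj l j jJ) h1 /= -subr_ge0.
  by move: h2; rewrite -(Hy l) ?msupp0 ?mdeg0 // Hy0.
have HL : Lfun y f = peval f xs.
  rewrite peval_Lfun; apply: Lfun_eq=> c hc.
  have [l hl] : exists l, pcoef (fl l) c != 0.
    apply/existsP; move: hc; rewrite Hf; apply: contraR; rewrite negb_exists=> /forallP hn.
    by apply/eqP; apply: big1=> l _; apply/eqP; have := hn l; rewrite negbK.
  have sc := Hfl l c hl.
  have dc : (mdeg c <= 2 * w)%N.
    apply: h2w; apply: leq_trans (pdeg_ge hc) (leq_maxl _ _).
  by rewrite (Hy l) ?(leq_trans dc) ?Hth.
split=> // x hx.
rewrite -HL.
have := Hmin (fun _ a => meval a x) (fun a => meval a x); rewrite -peval_Lfun; apply.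
split=> //; split; first exact: meval0.
split; first by move=> l; exact: psd_dirac.
by move=> l a b _; rewrite -peval_Lfun; exact: peval_hab.
Qed.
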